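(* Let $\theta\in(0,\pi)$ and $u\in\mathscr{C}^\infty_0(\mathbb{R}_+)$, and define $$\mathscr{K}_\theta(u)(t):=\int_0^\infty(st)^{-1/4}\mathfrak{K}_\theta(t/s)u(s)\,ds,\qquad t>0,$$ where $\mathfrak{K}_\theta(\tau):=\big(4\sin^2(\theta)+(\sqrt\tau-1/\sqrt\tau)^2\big)^{-1/4}$. Then for every $\beta\in(0,1/2)$, $$\int_0^\infty|\mathscr{K}_\theta(u)(t)|^2\,t^{2\beta}\,\frac{dt}{t}<+\infty,$$ i.e. $\mathscr{K}_\theta(u)\in\mathcal{L}^2_{-\beta}(\mathbb{R}_+)$.
   Context: $\mathscr{C}^\infty_0(\mathbb{R}_+)$: smooth functions on $[0,\infty)$ with bounded support contained in $(0,\infty)$. For $\gamma\in\mathbb{R}$, $\mathcal{L}^2_\gamma(\mathbb{R}_+)$ is the completion of $\mathscr{C}^\infty_0(\mathbb{R}_+)$ for the norm $\|u\|^2_{\mathcal{L}^2_\gamma(\mathbb{R}_+)}:=\int_0^\infty|u(r)|^2r^{-2\gamma}\,dr/r$. *)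

(* Defs.v *)
From HB Require Import structures.
From mathcomp Require Import all_boot all_order all_algebra.
From mathcomp Require Import all_classical all_reals all_analysis.
Set Implicit Arguments. Unset Strict Implicit. Unset Printing Implicit Defensive.
Import Order.TTheory GRing.Theory Num.Theory.
Import numFieldNormedType.Exports.
Local Open Scope classical_set_scope.
Local Open Scope ring_scope.

Definition smooth (R : realType) (f : R -> R) : Prop :=
  forall (n : nat) (x : R), derivable (iter n (fun g : R -> R => derive1 g) f) x 1.

(* C^infty_0(R_+): smooth on [0,oo) with bounded support contained in (0,oo);
   extended by zero to R, this means smooth on R with support in some [a,b], 0<a. *)
Definition Cinf0_Rplus (R : realType) (u : R -> R) : Prop :=
  smooth u /\ exists a b : R, 0 < a /\ forall s, (s < a \/ b < s) -> u s = 0.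

Definition frakK (R : realType) (theta tau : R) : R :=
  (4 * (sin theta) ^+ 2 + (Num.sqrt tau - (Num.sqrt tau)^-1) ^+ 2) `^ (- (4%:R)^-1).

Definition scrK (R : realType) (theta : R) (u : R -> R) (t : R) : R :=
  Rintegral (@lebesgue_measure R) `]0, +oo[
    (fun s => (s * t) `^ (- (4%:R)^-1) * frakK theta (t / s) * u s).

(* Main.v *)
Require Import Defs.
From HB Require Import structures.
From mathcomp Require Import all_boot all_order all_algebra.
From mathcomp Require Import all_classical all_reals all_analysis.
From mathcomp Require Import ring lra measurable_realfun.
Import Order.TTheory GRing.Theory Num.Theory.
Import numFieldNormedType.Exports.
Local Open Scope classical_set_scope.
Local Open Scope ring_scope.
Section S.
Variable R : realType.
Local Notation mu := (@lebesgue_measure R).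
Lemma le_int_nm (D1 D2 : set R) (f g : R -> \bar R) :
  (forall x, D1 x -> (0 <= f x)%E) -> (forall x, D2 x -> (0 <= g x)%E) ->
  (forall x, (f \_ D1) x <= (g \_ D2) x)%E ->
  (\int[mu]_(x in D1) f x <= \int[mu]_(x in D2) g x)%E.
Proof.
move=> f0 g0 fg; rewrite !ge0_integralE //.
apply: ereal_sup_le => _ [h hf <-]; exists h => //= x.
exact: le_trans (hf x) (fg x).
Qed.

Lemma int_abs_bound (D : set R) (h : R -> R) (K a b : R) : 0 <= K -> a <= b ->
  (forall s, D s -> `|h s| <= K) -> (forall s, s < a \/ b < s -> h s = 0) ->
  `|Rintegral mu D h| <= K * (b - a).
Proof.
move=> K0 ab hK h0.
have gb : forall g : R -> \bar R, (forall x, (0 <= g x)%E) ->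
    (forall x, (g x <= `|h x|%:E)%E) ->
    (0 <= \int[mu]_(x in D) g x <= (K * (b - a))%:E)%E.
  move=> g g0 gh; apply/andP; split; first exact: integral_ge0.
  apply: (@le_trans _ _ (\int[mu]_(x in `[a, b]) (cst K%:E) x)%E).
    apply: le_int_nm => // x.
    rewrite /patch; case: ifP => xD; last by case: ifP.
    have := gh x; case: ifP => xab.
      by move=> /le_trans; apply; rewrite lee_fin hK //; move: xD; rewrite inE.
    move=> H; have hx : h x = 0.
      apply: h0; move/negbT/negP: xab; rewrite in_setE /= in_itv /=.
      by move/negP; rewrite negb_and -!ltNge => /orP[]; [left|right].
    by move: H; rewrite hx normr0.
  rewrite integral_cst //= lebesgue_measure_itv /=.
  rewrite lte_fin; case: (ltP a b) => ab'; first by rewrite -EFinD -EFinM.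
  have -> : b = a by apply/eqP; rewrite eq_le ab'.
  by rewrite subrr mulr0 mule0.
rewrite /Rintegral integralE.
set f := (fun x => (h x)%:E).
have hp x : (f^\+ x <= `|h x|%:E)%E.
  by rewrite funeposE /f ge_max lee_fin ler_norm /= lee_fin normr_ge0.
have hn x : (f^\- x <= `|h x|%:E)%E.
  by rewrite funenegE /f ge_max lee_fin -normrN ler_norm /= lee_fin normr_ge0.
have := gb (f^\+)%E (fun x => funepos_ge0 _ x) hp; move=> /andP[p0 pK].
have := gb (f^\-)%E (fun x => funeneg_ge0 _ x) hn; move=> /andP[n0 nK].
set P := (\int[mu]_(x in D) f^\+ x)%E in p0 pK *.
set N := (\int[mu]_(x in D) f^\- x)%E in n0 nK *.
have Pf : P \is a fin_num by rewrite ge0_fin_numE // (le_lt_trans pK) ?ltry.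
have Nf : N \is a fin_num by rewrite ge0_fin_numE // (le_lt_trans nK) ?ltry.
rewrite -(fineK Pf) -(fineK Nf) -EFinB /=.
rewrite -(fineK Pf) lee_fin in p0 pK; rewrite -(fineK Nf) lee_fin in n0 nK.
move: pK nK; rewrite !lee_fin; move: (fine P) (fine N) p0 n0 => p n p0 n0 pK nK; rewrite ler_norml; apply/andP; split; lra.
Qed.

Lemma cinf_bound (u : R -> R) : Cinf0_Rplus u -> exists a b M : R,
  [/\ 0 < a, a <= b, 0 <= M, (forall s, `|u s| <= M) &
      (forall s, s < a \/ b < s -> u s = 0)].
Proof.
move=> [hs [a [b0 [a0 hsup]]]].
set b := Num.max a b0.
have ab : a <= b by rewrite le_max lexx.
have hsup' : forall s, s < a \/ b < s -> u s = 0.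
  move=> s [sa|bs]; apply: hsup; [by left|right].
  by apply: le_lt_trans bs; rewrite le_max lexx orbT.
have cu : {within `[a, b], continuous u}.
  by apply: derivable_within_continuous => x _; exact: (hs 0%N x).
have [c1 _ H1] := EVT_max ab cu.
have [c2 _ H2] := EVT_min ab cu.
exists a, b, (Num.max `|u c1| `|u c2|); split => //.
move=> s; have [sab|nsab] := boolP (s \in `[a, b]).
  have := H1 s sab; have := H2 s sab => h2 h1.
  rewrite le_max; case: (lerP 0 (u s)) => us.
    by rewrite ger0_norm // (le_trans h1 (ler_norm _)).
  have : - u s <= `|u c2| by rewrite ler_normr lerN2 h2 orbT.
  by move=> H; rewrite ltr0_norm // H orbT.
rewrite hsup' ?normr0 ?le_max ?normr_ge0 //.
move: nsab; rewrite in_itv /= negb_and -!ltNge => /orP[]; by [left|right].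
Qed.
Lemma powRN_le (x y r : R) : 0 < x -> x <= y -> 0 <= r -> y `^ (- r) <= x `^ (- r).
Proof.
move=> x0 xy r0; rewrite !powRN lef_pV2 ?posrE ?powR_gt0 //; last exact: lt_le_trans xy.
by apply: ge0_ler_powR => //; rewrite nnegrE ?ltW // (lt_le_trans x0).
Qed.

Lemma kernel_bound (theta a s t : R) : 0 < theta < pi -> 0 < a -> a <= s -> 0 < t ->
  (s * t) `^ (- (4%:R)^-1) * frakK theta (t / s) <=
  ((sin theta)^+2 * (Num.max a t)^+2) `^ (- (4%:R)^-1).
Proof.
move=> th a0 aS t0.
have s0 : 0 < s by apply: lt_le_trans aS.
have S0 : 0 < sin theta ^+ 2 by rewrite exprn_gt0 // sin_gt0_pi.
have S1 : sin theta ^+ 2 <= 1.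
  by rewrite sin2cos2 lerBlDr lerDl sqr_ge0.
have st0 : 0 <= s * t by rewrite mulr_ge0 // ltW.
rewrite /frakK -powRM //; last first.
  by rewrite addr_ge0 ?sqr_ge0 // mulr_ge0 // ltW.
set q := Num.sqrt (t / s).
have q0 : 0 < q by rewrite sqrtr_gt0 divr_gt0.
have q2 : q ^+ 2 = t / s by rewrite sqr_sqrtr // divr_ge0 // ltW.
have -> : s * t * (4 * sin theta ^+ 2 + (q - q^-1) ^+ 2) =
          4 * sin theta ^+ 2 * s * t + (t - s) ^+ 2.
  have -> : (q - q^-1) ^+ 2 = q ^+ 2 - 2 + (q ^+ 2)^-1.
    by field; rewrite gt_eqF.
  rewrite q2; field; rewrite ?gt_eqF //.
apply: powRN_le; last by rewrite invr_ge0.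
  by rewrite mulr_gt0 // exprn_gt0 // lt_max a0.
set S := sin theta ^+ 2.
have hm : Num.max a t ^+ 2 <= t ^+ 2 + s ^+ 2.
  case: (leP a t) => aT.
    nra.
  nra.
have : S * (t ^+ 2 + s ^+ 2) <= 4 * S * s * t + (t - s) ^+ 2.
  have h1 : 0 <= (1 - S) * (t - s) ^+ 2 by rewrite mulr_ge0 ?sqr_ge0 // subr_ge0.
  have h2 : 0 <= S * s * t by apply: mulr_ge0; [apply: mulr_ge0|]; apply: ltW.
  nra.
apply: le_trans; rewrite ler_pM2l //.
Qed.

Lemma geo_esum (C z : R) : 0 <= z < 1 ->
  (\sum_(i <oo) (C * z ^+ i)%:E = (C / (1 - z))%:E)%E.
Proof.
move=> /andP[z0 z1]; apply/cvg_lim => //.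
apply: cvg_EFin; first by apply: nearW => n; rewrite sumEFin.
rewrite (_ : (fine \o _) = series (geometric C z)).
  by apply: cvg_geometric_series; rewrite ger0_norm.
by apply/funext => n; rewrite /= sumEFin /= /series /=.
Qed.

Lemma shells_fin (f : R -> R) (A : nat -> set R) (C z : R) :
  (forall n, measurable (A n)) -> trivIset setT A ->
  measurable_fun (\bigcup_n A n) f -> (forall x, (\bigcup_n A n) x -> 0 <= f x) ->
  0 <= z < 1 -> (forall n, (\int[mu]_(x in A n) (f x)%:E <= (C * z ^+ n)%:E)%E) ->
  (\int[mu]_(x in \bigcup_n A n) (f x)%:E < +oo)%E.
Proof.
move=> mA tA mf f0 hz hn.
have mf' : measurable_fun (\bigcup_n A n) (EFin \o f).
  exact: (proj2 (measurable_EFinP _ _) mf).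
rewrite ge0_integral_bigcup //; try by move=> x /f0; rewrite lee_fin.

apply: (le_lt_trans (lee_nneseries (v := fun n => (C * z ^+ n)%:E) _ _)).
- by move=> i _ _; apply: integral_ge0 => x Ax; rewrite lee_fin f0 //; exists i.
- by move=> n _; exact: hn.
by rewrite geo_esum // ltry.
Qed.

Lemma pow2_unbounded (X : R) : exists n : nat, X < 2 ^+ n.
Proof.
have [X0|X0] := leP X 0; first by exists 0%N; rewrite expr0 (le_lt_trans X0).
exists (Num.bound X); apply: (lt_trans (archi_boundP (ltW X0))).
by rewrite -natrX ltr_nat ltn_expl.
Qed.

Lemma coverA : `]0, 1[%classic = \bigcup_n `[(2 ^+ n.+1)^-1, (2 ^+ n)^-1[%classic :> set R.
Proof.
apply/seteqP; split => t /=.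
- rewrite in_itv /= => /andP[t0 t1].
  case: (pselect (exists n : nat, (2 ^+ n.+1)^-1 <= t < (2 ^+ n)^-1)) => [[n hn]|hn].
    by exists n => //=; rewrite in_itv /=.
  have H : forall n : nat, t < (2 ^+ n)^-1.
    elim=> [|n IH]; first by rewrite expr0 invr1.
    rewrite ltNge; apply/negP => le; apply: hn; exists n; rewrite IH le //.
  have [n hn'] := pow2_unbounded t^-1.
  have := H n; rewrite -[X in X < _](invrK t) ltf_pV2 ?posrE ?invr_gt0 ?exprn_gt0 //.
  by rewrite ltNge (ltW hn').
- move=> [n _] /=; rewrite !in_itv /= => /andP[lo hi]; apply/andP; split.
    by apply: lt_le_trans lo; rewrite invr_gt0 exprn_gt0.
  apply: (lt_le_trans hi); rewrite invf_le1 ?exprn_gt0 //.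
  by apply: exprn_ege1; rewrite ler1n.
Qed.

Lemma coverB : `[1, +oo[%classic = \bigcup_n `[2 ^+ n, 2 ^+ n.+1[%classic :> set R.
Proof.
apply/seteqP; split => t /=.
- rewrite in_itv /= andbT => t1.
  case: (pselect (exists n : nat, 2 ^+ n <= t < 2 ^+ n.+1)) => [[n hn]|hn].
    by exists n => //=; rewrite in_itv /=.
  have H : forall n : nat, 2 ^+ n <= t.
    elim=> [|n IH]; first by rewrite expr0.
    rewrite leNgt; apply/negP => lt; apply: hn; exists n; rewrite IH lt //.
  have [n hn'] := pow2_unbounded t.
  by have := H n; rewrite leNgt hn'.
- move=> [n _] /=; rewrite !in_itv /= andbT => /andP[lo hi].
  by apply: le_trans lo; apply: exprn_ege1; rewrite ler1n.
Qed.

Lemma triv_shells (l r : nat -> R) :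
  (forall i j, (i < j)%N -> (r j <= l i) || (r i <= l j)) ->
  trivIset setT (fun n => `[l n, r n[%classic).
Proof.
move=> H; apply/trivIsetP => i j _ _ ij.
have key : forall i j, (i < j)%N -> `[l i, r i[%classic `&` `[l j, r j[%classic = set0 :> set R.
  move=> i' j' lij; apply/seteqP; split => // x [] /=; rewrite !in_itv /=.
  move=> /andP[li ri] /andP[lj rj].
  case/orP: (H _ _ lij) => h.
    by have := lt_le_trans rj h; rewrite ltNge li.
  by have := lt_le_trans ri h; rewrite ltNge lj.
case: (ltngtP i j) => [lij|lji|eij]; first exact: key.
  by rewrite setIC; exact: key.
by move: ij; rewrite eij eqxx.
Qed.

Lemma shell_int (f : R -> R) (l r c : R) : l <= r ->
  (forall x, l <= x < r -> 0 <= f x <= c) ->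
  (\int[mu]_(x in `[l, r[) (f x)%:E <= (c * (r - l))%:E)%E.
Proof.
move=> lr hf.
have mem x : x \in (`[l, r[%classic : set R) = (l <= x < r).
  apply/idP/idP; rewrite in_setE /= in_itv /= //. 
apply: (@le_trans _ _ (\int[mu]_(x in `[l, r[) (cst c%:E) x)%E).
  apply: le_int_nm.
  - by move=> x /= xI; rewrite lee_fin; case/andP: (hf x xI).
  - by move=> x /= xI; rewrite lee_fin; case/andP: (hf x xI) => /le_trans; apply.
  - move=> x; rewrite /patch; case: ifP => // xI.
    by move: xI; rewrite mem => /hf /andP[_ h]; rewrite /= lee_fin.
rewrite integral_cst //= lebesgue_measure_itv /= lte_fin.
case: (ltP l r) => lr'; first by rewrite -EFinD -EFinM.
have -> : r = l by apply/eqP; rewrite eq_le lr'.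
by rewrite subrr mulr0 mule0.
Qed.

Lemma powR_natX (x r : R) (n : nat) : 0 <= x -> (x ^+ n) `^ r = (x `^ r) ^+ n.
Proof.
move=> x0; rewrite -powR_mulrn // -powRrM mulrC powRrM powR_mulrn //.
exact: powR_ge0.
Qed.

Lemma measGb (E a p : R) :
  measurable_fun setT (fun t : R => E * t `^ p * (Num.max a t) `^ (-1)).
Proof.
have -> : (fun t : R => E * t `^ p * (Num.max a t) `^ (-1)) =
  ((fun t => E * t `^ p) \* ((@powR R)^~ (-1) \o (fun t => Num.max a t))).
  by [].
apply: measurable_funM.
  have -> : (fun t : R => E * t `^ p) = (cst E \* (@powR R)^~ p) by [].
  apply: measurable_funM => //.
apply: measurableT_comp => //.
have -> : (fun t : R => Num.max a t) = (cst a \max id) by [].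
exact: measurable_maxr.
Qed.

Lemma outer_fin (E a beta : R) (F : R -> R) : 0 <= E -> 0 < a -> 0 < beta < 2^-1 ->
  (forall t, 0 < t -> 0 <= F t <= E * t `^ (2 * beta - 1) * (Num.max a t) `^ (-1)) ->
  (\int[mu]_(t in (`]0%R, +oo[ : set R)) (F t)%:E < +oo)%E.
Proof.
move=> E0 a0 /andP[b0 b1] hF.
set p := 2 * beta - 1.
set Gb := fun t : R => E * t `^ p * (Num.max a t) `^ (-1).
have Gb0 t : 0 <= Gb t by rewrite /Gb !mulr_ge0 ?powR_ge0.
have mG : measurable_fun setT Gb by exact: measGb.
have memo x : x \in (`]0%R, +oo[%classic : set R) = (0 < x).
  by apply/idP/idP; rewrite in_setE /= in_itv /= andbT.
apply: (@le_lt_trans _ _ (\int[mu]_(t in (`]0%R, +oo[ : set R)) (Gb t)%:E)%E).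
  apply: le_int_nm.
  - by move=> x /=; rewrite in_itv /= andbT => /hF /andP[h _]; rewrite lee_fin.
  - by move=> x _; rewrite lee_fin.
  - move=> x; rewrite /patch; case: ifP => // xI.
    by move: xI; rewrite memo => /hF /andP[_ h]; rewrite lee_fin.
have eqU : (`]0%R, +oo[%classic : set R) = `]0, 1[%classic `|` `[1, +oo[%classic :> set R.
  apply/seteqP; split => x /=; rewrite !in_itv /= ?andbT.
    by move=> x0; case: (ltP x 1) => x1; [left; apply/andP | right].
  by case=> [/andP[]//| /(lt_le_trans ltr01)].
rewrite eqU ge0_integral_setU //; last 3 first.
- by rewrite -eqU; apply/measurable_EFinP; exact: measurable_funTS.
- by move=> x _; rewrite lee_fin.
- rewrite disj_set2E; apply/eqP/seteqP; split => // x [] /=; rewrite !in_itv /=.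
  by move=> /andP[_ x1] /andP[/(lt_le_trans x1)]; rewrite ltxx.
have two1 : (1 : R) <= 2 by rewrite ler1n.
apply: lte_add_pinfty.
- rewrite coverA.
  set z := (2^-1 : R) `^ (2 * beta).
  apply: (@shells_fin _ _ (E * a `^ (-1) * z) z).
  + by move=> n; exact: measurable_itv.
  + apply: triv_shells => i j ij; apply/orP; left.
    rewrite lef_pV2 ?posrE ?exprn_gt0 //; exact: (ler_weXn2l two1 ij).
  + exact: measurable_funTS.
  + by move=> x _.
  + apply/andP; split; first exact: powR_ge0.
    have hh : (2^-1 : R) `^ (2 * beta) < 1 `^ (2 * beta).
      apply: gt0_ltr_powR; rewrite ?nnegrE ?invr_ge0 //; lra.
    by move: hh; rewrite powR1.
  + move=> n; set lo : R := (2 ^+ n.+1)^-1; set hi : R := (2 ^+ n)^-1.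
    have lo0 : 0 < lo by rewrite invr_gt0 exprn_gt0.
    have hilo : hi - lo = lo by rewrite /hi /lo exprS invfM; field.
    have pE : p = - (1 - 2 * beta) by rewrite /p; lra.
    apply: (le_trans (@shell_int Gb lo hi (E * lo `^ p * a `^ (-1)) _ _)).
    * by rewrite -subr_ge0 hilo ltW.
    * move=> x /andP[lox xhi]; rewrite Gb0 /=; rewrite /Gb.
      have x0 : 0 < x by apply: lt_le_trans lox.
      apply: ler_pM; rewrite ?mulr_ge0 ?powR_ge0 //.
        apply: ler_pM; rewrite ?powR_ge0 //.
        rewrite pE; apply: powRN_le => //; lra.
      apply: powRN_le => //; first by rewrite le_max lexx.
    * rewrite lee_fin hilo.
      have key : lo `^ p * lo = z * z ^+ n.
        rewrite mulrC /p mulr_powRB1 ?ltW ?mulr_gt0 //.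
        by rewrite /lo -exprVn powR_natX ?invr_ge0 // exprS.
      have -> : E * lo `^ p * a `^ (-1) * lo = E * a `^ (-1) * (lo `^ p * lo) by ring.
      by rewrite key !mulrA.
- rewrite coverB.
  set z := (2 : R) `^ p.
  have pE : p = - (1 - 2 * beta) by rewrite /p; lra.
  apply: (@shells_fin _ _ E z).
  + by move=> n; exact: measurable_itv.
  + apply: triv_shells => i j ij; apply/orP; right.
    exact: (ler_weXn2l two1 ij).
  + exact: measurable_funTS.
  + by move=> x _.
  + apply/andP; split; first exact: powR_ge0.
    have hh : (1 : R) `^ (1 - 2 * beta) < 2 `^ (1 - 2 * beta).
      apply: gt0_ltr_powR; rewrite ?nnegrE //; lra.
    move: hh; rewrite powR1 /z pE powRN => hh.
    by rewrite invf_lt1 // (lt_trans ltr01 hh).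
  + move=> n; set lo : R := 2 ^+ n; set hi : R := 2 ^+ n.+1.
    have lo0 : 0 < lo by rewrite exprn_gt0.
    have hilo : hi - lo = lo by rewrite /hi /lo exprS; ring.
    apply: (le_trans (@shell_int Gb lo hi (E * lo `^ p * lo `^ (-1)) _ _)).
    * by rewrite -subr_ge0 hilo ltW.
    * move=> x /andP[lox xhi]; rewrite Gb0 /=; rewrite /Gb.
      have x0 : 0 < x by apply: lt_le_trans lox.
      apply: ler_pM; rewrite ?mulr_ge0 ?powR_ge0 //.
        apply: ler_pM; rewrite ?powR_ge0 //.
        rewrite pE; apply: powRN_le => //; lra.
      apply: powRN_le => //; first by rewrite le_max lox orbT.
    * rewrite lee_fin hilo (powR_inv1 (ltW lo0)) -mulrA mulVf ?gt_eqF // mulr1.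
      by rewrite /lo powR_natX.
Qed.
Lemma scrK_bound (theta : R) (u : R -> R) : 0 < theta < pi -> Cinf0_Rplus u ->
  exists E a : R, [/\ 0 <= E, 0 < a &
    forall t, 0 < t -> scrK theta u t ^+ 2 <= E / Num.max a t].
Proof.
move=> th /cinf_bound[a [b [M [a0 ab M0 uM u0]]]].
set S := sin theta ^+ 2.
have S0 : 0 < S by rewrite exprn_gt0 // sin_gt0_pi.
exists (M ^+ 2 * (b - a) ^+ 2 * S `^ (- 2^-1)), a; split => //.
  by apply: mulr_ge0; [apply: mulr_ge0; exact: sqr_ge0 | exact: powR_ge0].
move=> t t0.
set m := Num.max a t.
have m0 : 0 < m by rewrite lt_max a0.
set G := (S * m ^+ 2) `^ (- (4%:R)^-1).
have hK : `|scrK theta u t| <= G * M * (b - a).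
  rewrite /scrK; apply: int_abs_bound => //; first by rewrite mulr_ge0 ?powR_ge0.
    move=> s; rewrite /= in_itv /= andbT => s0.
    have [sa|aS] := ltP s a.
      by rewrite u0 ?mulr0 ?normr0 ?mulr_ge0 ?powR_ge0 //; left.
    rewrite normrM; apply: ler_pM => //.
      rewrite ger0_norm; first exact: kernel_bound.
      by rewrite mulr_ge0 // powR_ge0.
  by move=> s hs; rewrite u0 // mulr0.
have GG : G ^+ 2 = S `^ (- 2^-1) / m.
  rewrite expr2 /G -powRD; last by apply/implyP => _; rewrite gt_eqF // mulr_gt0 // exprn_gt0.
  have -> : - (4%:R)^-1 + - (4%:R)^-1 = - 2^-1 :> R by field.
  rewrite powRM ?sqr_ge0 ?ltW // [in X in _ * X = _]powRN powR12_sqrt ?sqr_ge0 //.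
  by rewrite sqrtr_sqr gtr0_norm.
rewrite -real_normK ?num_real //.
apply: (le_trans (y := (G * M * (b - a)) ^+ 2)).
  by rewrite lerXn2r ?nnegrE ?normr_ge0 // (le_trans _ hK).
rewrite !exprMn GG le_eqVlt; apply/orP; left; apply/eqP; rewrite /m; field; rewrite gt_eqF //.
Qed.
End S.

Theorem lemma7 (R : realType) (theta : R) (ur ui : R -> R)
  (htheta : 0 < theta < pi) (hur : Cinf0_Rplus ur) (hui : Cinf0_Rplus ui)
  (beta : R) (hbeta : 0 < beta < 2^-1) :
  (\int[@lebesgue_measure R]_(t in (`]0%R, +oo[ : set R))
     (((scrK theta ur t) ^+ 2 + (scrK theta ui t) ^+ 2) * t `^ (2 * beta) / t)%:E
   < +oo)%E.
Proof.
have [Er [ar [Er0 ar0 hr]]] := @scrK_bound R theta ur htheta hur.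
have [Ei [ai [Ei0 ai0 hi]]] := @scrK_bound R theta ui htheta hui.
apply: (@outer_fin R (Er + Ei) (Num.min ar ai) beta
  (fun t => ((scrK theta ur t) ^+ 2 + (scrK theta ui t) ^+ 2) * t `^ (2 * beta) / t)).
- by rewrite addr_ge0.
- by rewrite lt_min ar0 ai0.
- exact: hbeta.
move=> t t0.
set m := Num.max (Num.min ar ai) t.
have m0 : 0 < m by rewrite lt_max t0 orbT.
have mle c : c = ar \/ c = ai -> m <= Num.max c t.
  move=> hc; rewrite /m ge_max; apply/andP; split; rewrite le_max.
    by case: hc => ->; rewrite ge_min lexx ?orbT.
  by rewrite lexx orbT.
have Hr : scrK theta ur t ^+ 2 <= Er / m.
  apply: (le_trans (hr t t0)); apply: ler_wpM2l => //.
  have h1 : m <= Num.max ar t by apply: mle; left.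
  by rewrite lef_pV2 ?posrE // (lt_le_trans m0 h1).
have Hi : scrK theta ui t ^+ 2 <= Ei / m.
  apply: (le_trans (hi t t0)); apply: ler_wpM2l => //.
  have h1 : m <= Num.max ai t by apply: mle; right.
  by rewrite lef_pV2 ?posrE // (lt_le_trans m0 h1).
have pw : t `^ (2 * beta) / t = t `^ (2 * beta - 1).
  rewrite powRB ?powRr1 ?ltW //; apply/implyP => _; rewrite gt_eqF //.
apply/andP; split.
  by rewrite -mulrA mulr_ge0 ?addr_ge0 ?sqr_ge0 // pw powR_ge0.
rewrite -mulrA pw (powR_inv1 (ltW m0)).
have -> : (Er + Ei) * t `^ (2 * beta - 1) * m^-1 =
  (Er / m + Ei / m) * t `^ (2 * beta - 1) by rewrite /m; ring.
by apply: ler_wpM2r; [exact: powR_ge0 | exact: lerD].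
Qed.
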